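(* There exist a constant $c>0$ and, for infinitely many $T$, forecasts $\mathbf p^{(T)}\in[0,1]^T$ and outcomes $\mathbf x^{(T)}\in\{0,1\}^T$ such that $\mathrm{Cal}(\mathbf p^{(T)},\mathbf x^{(T)})\ge cT$, but for every bounded proper binary scoring rule $\ell$, $\mathrm{Reg}_\ell(\mathbf p^{(T)},\mathbf x^{(T)})=o(T)$ as $T\to\infty$.
   Context: A binary scoring rule is $\ell:[0,1]\times\{0,1\}\to\mathbb R$; with $\ell(p;q)=(1-q)\ell(p,0)+q\ell(p,1)$ it is proper if $\ell(p;p)\le\ell(p';p)$ for all $p,p'\in[0,1]$, and bounded if its values lie in $[-1,1]$. For $\mathbf x\in\{0,1\}^T$, $\mathbf p\in[0,1]^T$ and $\beta=\frac1T\sum_tx_t$, $\mathrm{Reg}_\ell(\mathbf p,\mathbf x)=\sum_t\ell(p_t,x_t)-\sum_t\ell(\beta,x_t)$. With $n_p=|\{t:p_t=p\}|$ and $m_p=|\{t:p_t=p,\ x_t=1\}|$, the calibration error is $\mathrm{Cal}(\mathbf p,\mathbf x)=\sum_p|p\,n_p-m_p|$ (sum over $p$ with $n_p>0$). *)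

(* Defs.v *)
From HB Require Import structures.
From mathcomp Require Import all_boot all_order all_algebra.
From mathcomp Require Export reals.
Set Implicit Arguments. Unset Strict Implicit. Unset Printing Implicit Defensive.
Import Order.TTheory GRing.Theory Num.Theory.
Local Open Scope ring_scope.

Section Defs.
Variable R : realType.

(* A binary scoring rule: l p y is l(p,y), outcome y : bool (false = 0, true = 1). *)
Definition exp_score (l : R -> bool -> R) (p q : R) : R :=
  (1 - q) * l p false + q * l p true.

Definition proper_scoring (l : R -> bool -> R) : Prop :=
  forall p p' : R, 0 <= p <= 1 -> 0 <= p' <= 1 ->
    exp_score l p p <= exp_score l p' p.

Definition bounded_scoring (l : R -> bool -> R) : Prop :=
  forall (p : R) (y : bool), 0 <= p <= 1 -> -1 <= l p y <= 1.

Definition base_rate (T : nat) (x : 'I_T -> bool) : R :=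
  (\sum_(t < T) (x t : nat)%:R) / T%:R.

Definition Reg (l : R -> bool -> R) (T : nat) (p : 'I_T -> R) (x : 'I_T -> bool) : R :=
  \sum_(t < T) l (p t) (x t) - \sum_(t < T) l (base_rate x) (x t).

Definition nfreq (T : nat) (p : 'I_T -> R) (v : R) : R :=
  (#|[pred t : 'I_T | p t == v]|)%:R.
Definition mfreq (T : nat) (p : 'I_T -> R) (x : 'I_T -> bool) (v : R) : R :=
  (#|[pred t : 'I_T | (p t == v) && x t]|)%:R.

Definition Cal (T : nat) (p : 'I_T -> R) (x : 'I_T -> bool) : R :=
  \sum_(v <- undup [seq p t | t <- enum 'I_T]) `| v * nfreq p v - mfreq p x v |.

End Defs.

(* Main.v *)
Require Import Defs.
From mathcomp Require Import all_boot all_order all_algebra.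
From mathcomp Require Import reals classical_sets lra ring.
Import Order.TTheory GRing.Theory Num.Theory.
Local Open Scope ring_scope.

Lemma right_reg (R : realType) (f : R -> R) (h eps : R) : 0 < eps -> h < 1 ->
  (forall u v, h < u -> u <= v -> v <= 1 -> f u <= f v) ->
  (forall u, h < u <= 1 -> -1 <= f u) ->
  exists x0, h < x0 /\ forall u v, h < u <= x0 -> h < v <= x0 -> `|f u - f v| <= eps.
Proof.
move=> e0 h1 mono bnd.
pose E : set R := fun y => exists u, h < u <= 1 /\ y = - f u.
have hs : has_sup E.
  split; first by exists (- f 1), 1; rewrite h1 lexx.
  exists 1 => y [u [hu ->]]; rewrite lerNl; exact: bnd.
have [y [u0 [hu0 ->]] hy] := sup_adherent e0 hs.
exists u0; split; first by case/andP: hu0.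
have key : forall u, h < u <= u0 -> - f u0 <= - f u <= sup E.
  move=> u /andP[hu uu0]; case/andP: hu0 => _ u01.
  apply/andP; split; first by rewrite lerN2; apply: mono.
  apply: sup_upper_bound => //; exists u; split => //.
  by rewrite hu (le_trans uu0 u01).
move=> u v /key/andP[a1 a2] /key/andP[b1 b2].
rewrite ler_norml; apply/andP; split; lra.
Qed.

Lemma sum_split (R : realType) (T k : nat) (F G : R) : (k <= T)%N ->
  \sum_(t < T) (if (t < k)%N then F else G) = F *+ k + G *+ (T - k).
Proof.
move=> kT.
rewrite -(big_mkord xpredT (fun t => if (t < k)%N then F else G)).
rewrite (@big_cat_nat _ _ _ k 0 T _ _ (leq0n k) kT) /=.
rewrite (eq_big_nat _ _ (F2 := fun _ => F)); last by move=> i /andP[_ ->].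
rewrite [X in _ + X](eq_big_nat _ _ (F2 := fun _ => G)); last first.
  by move=> i /andP[ki _]; rewrite ltnNge ki.
by rewrite !sumr_const_nat subn0.
Qed.

Lemma proper_mono0 (R : realType) (l : R -> bool -> R) : proper_scoring l ->
  forall p p', 0 <= p -> p <= p' -> p' <= 1 -> l p false <= l p' false.
Proof.
move=> pr p p' p0 pp' p'1.
have h1 := pr p p'; have h2 := pr p' p.
rewrite /exp_score in h1 h2.
have hp : 0 <= p <= 1 by rewrite p0 (le_trans pp' p'1).
have hp' : 0 <= p' <= 1 by rewrite p'1 (le_trans p0 pp').
move: (h1 hp hp') (h2 hp' hp) => {h1 h2} h1 h2.
set A := l p false - l p' false; set B := l p true - l p' true.
have e1 : A + p * (B - A) <= 0 by rewrite /A /B; lra.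
have e2 : 0 <= A + p' * (B - A) by rewrite /A /B; lra.
suff : A <= 0 by rewrite /A; lra.
case: (ltrgtP p p') => [lt|gt|eq]; last first.
- by rewrite /A eq subrr.
- by move: gt; rewrite ltNge pp'.
case: (ltrgtP 0 p) => [pp|pn|pz].
- nra.
- by move: pn; rewrite ltNge p0.
- by rewrite -pz in e1; lra.
Qed.

Lemma cal_lb (R : realType) (T k : nat) (a b : R) : (0 < k)%N -> (k < T)%N -> a != b ->
  exists na nb : nat, (na + nb = T)%N /\
  `|a * na%:R - na%:R| + `|b * nb%:R - 0| <=
     Cal (fun t : 'I_T => if (t < k)%N then a else b) (fun t : 'I_T => (t < k)%N).
Proof.
move=> k0 kT ab.
set p := (fun t : 'I_T => if (t < k)%N then a else b).
set x := (fun t : 'I_T => (t < k)%N).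
have T0 : (0 < T)%N by apply: leq_trans kT.
set s := undup [seq p t | t <- enum 'I_T].
have ua : a \in s.
  rewrite mem_undup; apply/mapP; exists (Ordinal T0); first by rewrite mem_enum.
  by rewrite /p /= k0.
have ub : b \in s.
  rewrite mem_undup; apply/mapP; exists (Ordinal kT); first by rewrite mem_enum.
  by rewrite /p /= ltnn.
have eqa : forall t, (p t == a) = (t < k)%N.
  by move=> t; rewrite /p; case: ifP => _; rewrite ?eqxx // eq_sym (negbTE ab).
have eqb : forall t, (p t == b) = ~~ (t < k)%N.
  by move=> t; rewrite /p; case: ifP => _; rewrite ?eqxx // (negbTE ab).
exists #|[pred t : 'I_T | (t < k)%N]|, #|[predC [pred t : 'I_T | (t < k)%N]]|.
split; first by rewrite cardC card_ord.
have Fa : nfreq p a = (#|[pred t : 'I_T | (t < k)%N]|)%:R.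
  by rewrite /nfreq; congr (_%:R); apply: eq_card => t; rewrite !inE eqa.
have Ma : mfreq p x a = (#|[pred t : 'I_T | (t < k)%N]|)%:R.
  by rewrite /mfreq; congr (_%:R); apply: eq_card => t; rewrite !inE eqa andbb.
have Fb : nfreq p b = (#|[predC [pred t : 'I_T | (t < k)%N]]|)%:R.
  by rewrite /nfreq; congr (_%:R); apply: eq_card => t; rewrite !inE eqb.
have Mb : mfreq p x b = 0.
  rewrite /mfreq (eq_card0 (A := [pred t : 'I_T | (p t == b) && x t])) //.
  by move=> t; rewrite !inE eqb /x; case: (t < k)%N.
rewrite /Cal -/s (bigD1_seq a ua (undup_uniq _)) /= Fa Ma.
apply: lerD => //.
rewrite -big_filter.
have ub' : b \in [seq i <- s | i != a] by rewrite mem_filter eq_sym ab.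
rewrite (bigD1_seq b ub' (filter_uniq _ (undup_uniq _))) /= Fb Mb.
rewrite lerDl; apply: sumr_ge0 => *; exact: normr_ge0.
Qed.

Lemma dfacts (R : realType) (T : nat) :
  let n : R := (T + 4)%:R in 4 <= n /\ n^-1 * n = 1 /\ 0 < n^-1 /\ n^-1 <= 1/4.
Proof.
move=> n.
have n4 : 4 <= n by rewrite /n ler_nat leq_addl.
have nV : n^-1 * n = 1 by rewrite mulVf // gt_eqF // (lt_le_trans _ n4).
split=> //; split=> //.
have : 0 < n^-1 by rewrite invr_gt0 (lt_le_trans _ n4).
move=> h; split=> //; nra.
Qed.

Theorem lemma4p1 (R : realType) :
  exists c : R, 0 < c /\
  exists (S : nat -> bool) (p : forall T : nat, 'I_T -> R)
         (x : forall T : nat, 'I_T -> bool),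
    (* S is infinite *)
    (forall N : nat, exists T : nat, (N <= T)%N /\ S T) /\
    (forall T : nat, S T ->
       (forall t : 'I_T, 0 <= p T t <= 1) /\ c * T%:R <= Cal (p T) (x T)) /\
    (* for every bounded proper scoring rule, Reg = o(T) along S *)
    (forall l : R -> bool -> R, bounded_scoring l -> proper_scoring l ->
       forall eps : R, 0 < eps -> exists N : nat, forall T : nat,
         S T -> (N <= T)%N -> `| Reg l (p T) (x T) | <= eps * T%:R).
Proof.
pose d (T : nat) : R := ((T + 4)%:R)^-1.
pose a T := 1/2 + d T.
pose b T := 1/2 + d T / 2.
exists (1/4); split; first lra.
exists (fun T => ~~ odd T), (fun T t => if (t < T./2)%N then a T else b T),
  (fun T t => (t < T./2)%N).
split.
  move=> N; exists N.*2; split; first by rewrite -addnn leq_addr.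
  by rewrite odd_double.
split.
  move=> T hT.
  have [k eT] : exists k, T = k.*2.
    by exists T./2; rewrite -{1}(odd_double_half T) (negbTE hT).
  subst T; rewrite doubleK.
  have [_ [_ [d0 d1]]] := dfacts R k.*2.
  rewrite -/(d _) in d0 d1.
  split.
    by move=> t; case: ifP => _; rewrite /a /b; apply/andP; split; lra.
  case: (posnP k) => [->|k0].
    rewrite mulr0; apply: sumr_ge0 => *; exact: normr_ge0.
  have kT : (k < k.*2)%N by rewrite -addnn -{1}(addn0 k) ltn_add2l.
  have ab : a k.*2 != b k.*2 by apply/eqP; rewrite /a /b; lra.
  have [na [nb [hn hle]]] := @cal_lb R _ _ _ _ k0 kT ab.
  apply: le_trans hle.
  have hT2 : (k.*2)%:R = na%:R + nb%:R :> R by rewrite -hn natrD.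
  rewrite hT2 distrC subr0.
  have hna : 0 <= (na%:R : R) by [].
  have hnb : 0 <= (nb%:R : R) by [].
  have := ler_norm (na%:R - a k.*2 * na%:R).
  have := ler_norm (b k.*2 * nb%:R).
  have q1 : 0 <= (1/4 - d k.*2) * na%:R by apply: mulr_ge0 => //; lra.
  have q2 : 0 <= d k.*2 * nb%:R by apply: mulr_ge0 => //; lra.
  rewrite /a /b; lra.
move=> l lb lp eps e0.
have h1 : (1/2 : R) < 1 by lra.
have mono : forall u v, 1/2 < u -> u <= v -> v <= 1 -> l u false <= l v false.
  move=> u v hu uv v1; apply: (@proper_mono0 R l lp) => //; lra.
have bnd : forall u, 1/2 < u <= 1 -> -1 <= l u false.
  move=> u /andP[u0 u1].
  have /andP[] // : -1 <= l u false <= 1 by apply: lb; apply/andP; split; lra.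
have [x0 [hx0 hreg]] := @right_reg R _ _ _ e0 h1 mono bnd.
pose M := Num.bound (8 / eps + (x0 - 1/2)^-1).
exists M => T hT MT.
have [k eT] : exists k, T = k.*2.
  by exists T./2; rewrite -{1}(odd_double_half T) (negbTE hT).
subst T; rewrite doubleK.
have [n4 [nV [d0 d1]]] := dfacts R k.*2.
rewrite -/(d _) in nV d0 d1.
set n : R := (k.*2 + 4)%:R in n4 nV.
set D := d k.*2 in nV d0 d1 *.
have hDn : D = n^-1 by [].
have hM : 8 / eps + (x0 - 1/2)^-1 < n.
  apply: (lt_le_trans (archi_boundP _)).
    apply: addr_ge0; first by apply: divr_ge0 => //; lra.
    by rewrite invr_ge0; lra.
  by rewrite ler_nat (leq_trans MT) // leq_addr.
have hx : 0 < (x0 - 1/2)^-1 by rewrite invr_gt0; lra.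
have hx' : (x0 - 1/2)^-1 * (x0 - 1/2) = 1 by rewrite mulVf //; apply/eqP; lra.
have he : 8 / eps * eps = 8 by rewrite divfK //; apply/eqP; lra.
have he' : 0 < 8 / eps by apply: divr_gt0 => //; lra.
have D8 : 8 * D <= eps.
  have : 8 < n * eps.
    by rewrite -he ltr_pM2r //; lra.
  nra.
have Dx : D <= x0 - 1/2.
  have : 1 < n * (x0 - 1/2).
    by rewrite -[X in X < _]hx' ltr_pM2r; lra.
  nra.
case: (posnP k) => [->|k0].
  by rewrite /Reg !big_ord0 subrr normr0 mulr0.
have kk : (k <= k.*2)%N by rewrite -addnn leq_addr.
have base : base_rate R (fun t : 'I_k.*2 => (t < k)%N) = 1/2 :> R.
  rewrite /base_rate.
  rewrite (eq_bigr (fun t : 'I_k.*2 => if (t < k)%N then 1 else 0 : R)); last first.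
    by move=> t _; case: (t < k)%N.
  rewrite (@sum_split R) // mul0rn addr0 -muln2 natrM.
  have : (k%:R : R) != 0 by rewrite pnatr_eq0 -lt0n.
  by move=> hk; rewrite invfM mulrA mulfV.
rewrite /Reg base.
rewrite (eq_bigr (fun t : 'I_k.*2 => if (t < k)%N then l (a k.*2) true else l (b k.*2) false));
  last by move=> t _; case: (t < k)%N.
rewrite [X in _ - X](eq_bigr (fun t : 'I_k.*2 => if (t < k)%N then l (1/2) true else l (1/2) false));
  last by move=> t _; case: (t < k)%N.
have kk2 : (k.*2 - k = k)%N by rewrite -addnn addnK.
rewrite !(@sum_split R) // kk2 -!mulrnDl -mulrnBl normrMn.
have hB := hreg (b k.*2) (a k.*2).
rewrite /a /b -/D in hB.
have : `|l (1 / 2 + D / 2) false - l (1 / 2 + D) false| <= eps.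
  by apply: hB; apply/andP; split; lra.
rewrite ler_norml => /andP[hb1 hb2].
have hh : (0 <= (1/2 : R) <= 1) by apply/andP; split; lra.
have ha : (0 <= (1/2 + D : R) <= 1) by apply/andP; split; lra.
have P1 := lp (1/2) (1/2 + D) hh ha.
have P2 := lp (1/2 + D) (1/2) ha hh.
rewrite /exp_score in P1 P2.
have /andP[A0l A0u] := lb (1/2 + D) false ha.
have /andP[A1l A1u] := lb (1/2 + D) true ha.
have /andP[H0l H0u] := lb (1/2) false hh.
have /andP[H1l H1u] := lb (1/2) true hh.
rewrite /a /b -/D.
set A0 := l (1/2 + D) false in P1 P2 A0l A0u hb1 hb2 *.
set A1 := l (1/2 + D) true in P1 P2 A1l A1u *.
set H0 := l (1/2) false in P1 P2 H0l H0u *.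
set H1 := l (1/2) true in P1 P2 H1l H1u *.
set B0 := l (1/2 + D / 2) false in hb1 hb2 *.
have Sl : 0 <= A0 + A1 - H0 - H1 by lra.
have Su : A0 + A1 - H0 - H1 <= 8 * D.
  have q : 0 <= D * (4 - ((A0 - H0) - (A1 - H1))) by apply: mulr_ge0; lra.
  lra.
have kpos : (0 : R) <= k%:R by [].
rewrite -muln2 natrM -[X in X <= _]mulr_natr.
have hX : `|A1 + B0 - (H1 + H0)| <= 2 * eps by rewrite ler_norml; apply/andP; split; lra.
have -> : eps * (k%:R * 2) = (2 * eps) * k%:R by ring.
by rewrite ler_wpM2r.
Qed.
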